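(* Let $0<\lambda<1$, $0<\beta<1$. The nonzero proper ideals of $\mathcal{B}'(\lambda,\beta)$ are exactly the following: (i) if $\beta=\lambda\neq\tfrac12$: $\mathbb{R}c\subset\operatorname{span}\{b,c\}\subset\operatorname{span}\{a,b,c\}$; (ii) if $\beta=1-\lambda$, $\lambda\neq\tfrac12$: $\mathbb{R}c\subset\operatorname{span}\{a,c\}\subset\operatorname{span}\{a,b,c\}$; (iii) if $\beta\neq\lambda$ and $\beta\neq 1-\lambda$: $\mathbb{R}c\subset\operatorname{span}\{a,b,c\}$; (iv) if $\lambda=\beta=\tfrac12$: $\mathbb{R}c$, $\operatorname{span}\{a,c\}$, $\operatorname{span}\{b,c\}$, $\operatorname{span}\{a,b,c\}$ (with $\mathbb{R}c$ contained in both $2$-dimensional ideals, which are both contained in $\operatorname{span}\{a,b,c\}$).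
   Context: For real parameters $0<\lambda<1$ and $0<\beta<1$, $\mathcal{B}'(\lambda,\beta)$ denotes the commutative (non-associative) $4$-dimensional real algebra with basis $\{o,a,b,c\}$ whose bilinear commutative multiplication $\circ$ is determined by $o\circ o=o$, $o\circ a=\lambda a$, $o\circ b=\lambda b$, $a\circ a=a$, $b\circ b=b$, $a\circ b=\frac{\lambda-\beta}{\lambda}a+\frac{\lambda+\beta-1}{\lambda}b+c$, and $c\circ x=x\circ c=0$ for every $x$. (In the paper the basis vector $c$ is written $ab$.) An ideal is a linear subspace $I$ with $x\circ I\subseteq I$ for all $x$ in the algebra. *)

(* Defs.v *)
(* The algebra B'(lambda,beta) over a real field R is
   modelled on the row vectors 'rV[R]_4, with coordinates (o, a, b, c). *)
From HB Require Import structures.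
From mathcomp Require Import all_boot all_order all_algebra.
Set Implicit Arguments. Unset Strict Implicit. Unset Printing Implicit Defensive.
Import Order.TTheory GRing.Theory Num.Theory.
Local Open Scope ring_scope.

Section Bprime.
Variable R : realFieldType.

Definition bvec (k : nat) : 'rV[R]_4 := delta_mx 0 (inord k).
Definition vo := bvec 0.
Definition va := bvec 1.
Definition vb := bvec 2.
Definition vc := bvec 3.

Definition bmul (l be : R) (i j : nat) : 'rV[R]_4 :=
  match i, j with
  | 0, 0 => vo
  | 0, 1 | 1, 0 => l *: va
  | 0, 2 | 2, 0 => l *: vb
  | 1, 1 => va
  | 2, 2 => vb
  | 1, 2 | 2, 1 => ((l - be) / l) *: va + ((l + be - 1) / l) *: vb + vc
  | _, _ => 0
  end.

Definition Bmul (l be : R) (x y : 'rV[R]_4) : 'rV[R]_4 :=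
  \sum_(i < 4) \sum_(j < 4) (x 0 i * y 0 j) *: bmul l be i j.

Definition is_ideal (l be : R) (I : {vspace 'rV[R]_4}) : Prop :=
  forall x y, y \in I -> Bmul l be x y \in I.

Definition nonzero_proper_ideal (l be : R) (I : {vspace 'rV[R]_4}) : Prop :=
  [/\ is_ideal l be I, I != 0%VS & I != fullv].

End Bprime.

(* Main.v *)
Require Import Defs.
From HB Require Import structures.
From mathcomp Require Import all_boot all_order all_algebra.
From mathcomp Require Import ring lra.
Set Implicit Arguments. Unset Strict Implicit. Unset Printing Implicit Defensive.
Import Order.TTheory GRing.Theory Num.Theory.
Local Open Scope ring_scope.
Section S.
Variable R : realFieldType.
Definition cf (x : 'rV[R]_4) (i : nat) := x 0 (inord i).
Lemma cf_bvec i j : (i < 4)%N -> (j < 4)%N -> cf (bvec R j) i = (i == j)%:R.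
Proof. move=> hi hj. rewrite /cf /bvec mxE /= -val_eqE /= !inordK //. Qed.
Lemma sum4 (V : zmodType) (F : 'I_4 -> V) :
  \sum_(i < 4) F i = F (inord 0) + F (inord 1) + F (inord 2) + F (inord 3).
Proof.
rewrite !big_ord_recl big_ord0 addr0 !addrA.
by congr (F _ + F _ + F _ + F _); apply: val_inj; rewrite /= inordK.
Qed.
Lemma cfD x y i : cf (x + y) i = cf x i + cf y i. Proof. by rewrite /cf mxE. Qed.
Lemma cfB x y i : cf (x - y) i = cf x i - cf y i. Proof. by rewrite /cf !mxE. Qed.
Lemma cfZ a x i : cf (a *: x) i = a * cf x i. Proof. by rewrite /cf mxE. Qed.
Lemma cfN x i : cf (- x) i = - cf x i. Proof. by rewrite /cf mxE. Qed.
Lemma cf0 i : cf 0 i = 0. Proof. by rewrite /cf mxE. Qed.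
Lemma cf_eq x y : (forall i, (i < 4)%N -> cf x i = cf y i) -> x = y.
Proof. move=> H; apply/rowP => k. have := H k (ltn_ord k). by rewrite /cf inord_val. Qed.

Variables l be : R.
Lemma cf_Bmul x y :
  [/\ cf (Bmul l be x y) 0 = cf x 0 * cf y 0,
      cf (Bmul l be x y) 1 = l * (cf x 0 * cf y 1 + cf x 1 * cf y 0) + cf x 1 * cf y 1
                              + (l - be) / l * (cf x 1 * cf y 2 + cf x 2 * cf y 1),
      cf (Bmul l be x y) 2 = l * (cf x 0 * cf y 2 + cf x 2 * cf y 0) + cf x 2 * cf y 2
                              + (l + be - 1) / l * (cf x 1 * cf y 2 + cf x 2 * cf y 1)
    & cf (Bmul l be x y) 3 = cf x 1 * cf y 2 + cf x 2 * cf y 1].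
Proof.
rewrite /Bmul /cf.
rewrite !summxE !sum4.
rewrite !inordK //= /vo /va /vb /vc /bvec.
rewrite !mxE /= -!val_eqE /= !inordK //=.
split; ring.
Qed.
Lemma cfM0 x y : cf (Bmul l be x y) 0 = cf x 0 * cf y 0. Proof. by case: (cf_Bmul x y). Qed.
Lemma cfM1 x y : cf (Bmul l be x y) 1 = l * (cf x 0 * cf y 1 + cf x 1 * cf y 0) + cf x 1 * cf y 1
                              + (l - be) / l * (cf x 1 * cf y 2 + cf x 2 * cf y 1).
Proof. by case: (cf_Bmul x y). Qed.
Lemma cfM2 x y : cf (Bmul l be x y) 2 = l * (cf x 0 * cf y 2 + cf x 2 * cf y 0) + cf x 2 * cf y 2
                              + (l + be - 1) / l * (cf x 1 * cf y 2 + cf x 2 * cf y 1).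
Proof. by case: (cf_Bmul x y). Qed.
Lemma cfM3 x y : cf (Bmul l be x y) 3 = cf x 1 * cf y 2 + cf x 2 * cf y 1.
Proof. by case: (cf_Bmul x y). Qed.

Ltac cfsimp := rewrite ?(cfD, cfB, cfN, cfZ, cf0, cfM0, cfM1, cfM2, cfM3) /vo /va /vb /vc ?cf_bvec //=.
Ltac crunch := apply: cf_eq => -[|[|[|[|i]]]] // _; cfsimp.

Notation o := (vo R). Notation a := (va R). Notation b := (vb R). Notation c := (vc R).

Lemma decomp y : y = cf y 0 *: o + cf y 1 *: a + cf y 2 *: b + cf y 3 *: c.
Proof. crunch; ring. Qed.

Lemma span_cf (X : seq 'rV[R]_4) k y :
  all (fun v => cf v k == 0) X -> y \in <<X>>%VS -> cf y k = 0.
Proof.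
move=> hX /(@coord_span _ _ _ (in_tuple X)) ->.
rewrite /cf summxE big1 // => i _; rewrite mxE.
have /eqP := (allP hX) _ (mem_nth 0 (ltn_ord i)).
by rewrite /cf => ->; rewrite mulr0.
Qed.

Lemma inspan (X : seq 'rV[R]_4) v : v \in X -> v \in <<X>>%VS.
Proof. exact: memv_span. Qed.

Lemma mem_abc y : cf y 0 = 0 -> y \in <<[:: a; b; c]>>%VS.
Proof.
move=> h0; rewrite (decomp y) h0 scale0r add0r.
by rewrite !memvD ?memvZ // inspan // !inE eqxx ?orbT.
Qed.
Lemma mem_ac y : cf y 0 = 0 -> cf y 2 = 0 -> y \in <<[:: a; c]>>%VS.
Proof.
move=> h0 h2; rewrite (decomp y) h0 h2 !scale0r add0r addr0.
by rewrite !memvD ?memvZ // inspan // !inE eqxx ?orbT.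
Qed.
Lemma mem_bc y : cf y 0 = 0 -> cf y 1 = 0 -> y \in <<[:: b; c]>>%VS.
Proof.
move=> h0 h2; rewrite (decomp y) h0 h2 !scale0r !add0r.
by rewrite !memvD ?memvZ // inspan // !inE eqxx ?orbT.
Qed.
Lemma mem_c y : cf y 0 = 0 -> cf y 1 = 0 -> cf y 2 = 0 -> y \in <[c]>%VS.
Proof.
move=> h0 h1 h2; rewrite (decomp y) h0 h1 h2 !scale0r !add0r.
by rewrite memvZ // memv_line.
Qed.

Lemma abc_cf y : y \in <<[:: a; b; c]>>%VS -> cf y 0 = 0.
Proof. by apply: span_cf; rewrite /= !cf_bvec //= !eqxx. Qed.
Lemma ac_cf y : y \in <<[:: a; c]>>%VS -> cf y 0 = 0 /\ cf y 2 = 0.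
Proof. by move=> h; split; apply: (span_cf _ h); rewrite /= !cf_bvec //= !eqxx. Qed.
Lemma bc_cf y : y \in <<[:: b; c]>>%VS -> cf y 0 = 0 /\ cf y 1 = 0.
Proof. by move=> h; split; apply: (span_cf _ h); rewrite /= !cf_bvec //= !eqxx. Qed.
Lemma c_cf y : y \in <[c]>%VS -> [/\ cf y 0 = 0, cf y 1 = 0 & cf y 2 = 0].
Proof. by case/vlineP => k ->; rewrite !cfZ /vc !cf_bvec // !mulr0. Qed.

Hypothesis hl0 : l != 0.
Hypothesis hl1 : l != 1.

Lemma hl1' : l - 1 != 0. Proof. by rewrite subr_eq0. Qed.
Lemma hl1'' : 1 - l != 0. Proof. by rewrite subr_eq0 eq_sym. Qed.

Ltac fld := field; rewrite ?hl0 ?hl1' ?hl1'' //.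

Section Ideal.
Variable I : {vspace 'rV[R]_4}.
Hypothesis hI : is_ideal l be I.
Hypothesis hnz : I != 0%VS.
Hypothesis hpr : I != fullv.

Let B := Bmul l be.

Lemma full_of_vo : o \in I -> I = fullv.
Proof.
move=> ho.
have ha : a \in I.
  have -> : a = l^-1 *: B a o by crunch; fld.
  by rewrite memvZ // hI.
have hb : b \in I.
  have -> : b = l^-1 *: B b o by crunch; fld.
  by rewrite memvZ // hI.
have hc : c \in I.
  have -> : c = B a b - ((l - be) / l) *: a - ((l + be - 1) / l) *: b by crunch; fld.
  by rewrite !memvB ?memvZ // hI.
apply/eqP; rewrite eqEsubv subvf /=; apply/subvP => x _.
by rewrite (decomp x) !memvD ?memvZ.
Qed.

Lemma y0 y : y \in I -> cf y 0 = 0.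
Proof.
move=> hy; apply/eqP; apply: contraR hpr => h; apply/eqP; apply: full_of_vo.
have -> : o = (cf y 0 * (1 - l))^-1 *: (B o (B o y) - l *: B o y).
  by crunch; fld; rewrite ?h ?hl1'' ?hl0.
by rewrite memvZ // memvB ?memvZ // hI // hI.
Qed.

Lemma abI y : y \in I -> cf y 1 *: a + cf y 2 *: b \in I.
Proof.
move=> hy; have -> : cf y 1 *: a + cf y 2 *: b = l^-1 *: B o y.
  crunch; rewrite ?(y0 hy); fld.
by rewrite memvZ // hI.
Qed.

Lemma cpI y : y \in I -> cf y 3 *: c \in I.
Proof.
move=> hy; have -> : cf y 3 *: c = y - (cf y 1 *: a + cf y 2 *: b).
  crunch; rewrite ?(y0 hy); ring.
by rewrite memvB // abI.
Qed.

Lemma cI' y : y \in I -> cf y 3 != 0 -> c \in I.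
Proof.
move=> hy h; have -> : c = (cf y 3)^-1 *: (cf y 3 *: c) by rewrite scalerA mulVf // scale1r.
by rewrite memvZ // cpI.
Qed.

Lemma cI : c \in I.
Proof.
have hy := memv_pick I; set y := vpick I in hy.
have ynz : y != 0 by rewrite vpick0.
have [h3|h3] := eqVneq (cf y 3) 0; last exact: cI' hy h3.
have [h1|h1] := eqVneq (cf y 1) 0.
  have [h2|h2] := eqVneq (cf y 2) 0.
    case/eqP: ynz; crunch; rewrite ?(y0 hy) ?h1 ?h2 ?h3 //.
  apply: (@cI' (B a y)); first by rewrite hI.
  by cfsimp; rewrite h1 mul1r mul0r addr0.
apply: (@cI' (B b y)); first by rewrite hI.
by cfsimp; rewrite mul0r mul1r add0r.
Qed.

Lemma L4a : a \in I -> l + be - 1 != 0 -> b \in I.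
Proof.
move=> ha hq.
have -> : b = ((l + be - 1) / l)^-1 *: (B b a - ((l - be) / l) *: a - c).
  by crunch; fld; rewrite ?hq.
by rewrite memvZ // !memvB ?memvZ // ?hI // cI.
Qed.

Lemma L4b : b \in I -> l - be != 0 -> a \in I.
Proof.
move=> hb hp.
have -> : a = ((l - be) / l)^-1 *: (B a b - ((l + be - 1) / l) *: b - c).
  by crunch; fld; rewrite ?hp.
by rewrite memvZ // !memvB ?memvZ // ?hI // cI.
Qed.

Lemma L5 y : y \in I -> cf y 1 != 0 -> cf y 2 != 0 -> a \in I /\ b \in I.
Proof.
move=> hy h1 h2.
set A := cf y 1 *: a + cf y 2 *: b.
have hA : A \in I by exact: abI.
have h1I : B a y - A - cf y 2 *: c \in I by rewrite !memvB ?memvZ ?hI ?cI.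
have h2I : B b y - A - cf y 1 *: c \in I by rewrite !memvB ?memvZ ?hI ?cI.
split.
  have -> : a = (l / (l - 1)) *: (((l + be - 1) / l / cf y 2) *: (B a y - A - cf y 2 *: c)
     - ((l + be - 1) / l - 1) / cf y 1 *: (B b y - A - cf y 1 *: c)).
    by rewrite /A; crunch; rewrite ?(y0 hy); fld; rewrite ?h1 ?h2.
  by rewrite memvZ // memvB ?memvZ.
have -> : b = (l / (l - 1)) *: (((l - be) / l / cf y 1) *: (B b y - A - cf y 1 *: c)
     - ((l - be) / l - 1) / cf y 2 *: (B a y - A - cf y 2 *: c)).
  by rewrite /A; crunch; rewrite ?(y0 hy); fld; rewrite ?h1 ?h2.
by rewrite memvZ // memvB ?memvZ.
Qed.

Lemma L6 y : y \in I -> cf y 1 != 0 -> a \in I.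
Proof.
move=> hy h1; have [h2|h2] := eqVneq (cf y 2) 0; last by case: (L5 hy h1 h2).
have := abI hy; rewrite h2 scale0r addr0 => h.
by have := memvZ (cf y 1)^-1 h; rewrite scalerA mulVf // scale1r.
Qed.

Lemma L7 y : y \in I -> cf y 2 != 0 -> b \in I.
Proof.
move=> hy h2; have [h1|h1] := eqVneq (cf y 1) 0; last by case: (L5 hy h1 h2).
have := abI hy; rewrite h1 scale0r add0r => h.
by have := memvZ (cf y 2)^-1 h; rewrite scalerA mulVf // scale1r.
Qed.

Lemma classify :
  [\/ I = <[c]>%VS, I = <<[:: a; c]>>%VS /\ l + be - 1 = 0,
      I = <<[:: b; c]>>%VS /\ l - be = 0 | I = <<[:: a; b; c]>>%VS].
Proof.
have [ha|ha] := boolP (a \in I); have [hb|hb] := boolP (b \in I).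
- apply: Or44; apply/eqP; rewrite eqEsubv; apply/andP; split.
    by apply/subvP => y hy; apply: mem_abc; apply: y0.
  by apply/span_subvP => v; rewrite !inE => /or3P [] /eqP ->; rewrite ?cI.
- apply: Or42; split; last first.
    by apply/eqP; apply: contraNT hb; apply: L4a.
  apply/eqP; rewrite eqEsubv; apply/andP; split.
    apply/subvP => y hy; apply: mem_ac; first exact: y0.
    by apply/eqP; apply: contraNT hb; apply: L7.
  by apply/span_subvP => v; rewrite !inE => /orP [] /eqP ->; rewrite ?cI.
- apply: Or43; split; last first.
    by apply/eqP; apply: contraNT ha; apply: L4b.
  apply/eqP; rewrite eqEsubv; apply/andP; split.
    apply/subvP => y hy; apply: mem_bc; first exact: y0.
    by apply/eqP; apply: contraNT ha; apply: L6.
  by apply/span_subvP => v; rewrite !inE => /orP [] /eqP ->; rewrite ?cI.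
- apply: Or41; apply/eqP; rewrite eqEsubv; apply/andP; split.
    apply/subvP => y hy; apply: mem_c; first exact: y0.
      by apply/eqP; apply: contraNT ha; apply: L6.
    by apply/eqP; apply: contraNT hb; apply: L7.
  by rewrite -span_seq1; apply/span_subvP => v; rewrite !inE => /eqP ->; rewrite cI.
Qed.

End Ideal.

Lemma ideal_c : is_ideal l be <[c]>%VS.
Proof.
move=> x y /c_cf [h0 h1 h2]; apply: mem_c.
- by rewrite cfM0 h0 mulr0.
- by rewrite cfM1 h0 h1 h2; ring.
- by rewrite cfM2 h0 h1 h2; ring.
Qed.
Lemma ideal_abc : is_ideal l be <<[:: a; b; c]>>%VS.
Proof. by move=> x y /abc_cf h0; apply: mem_abc; rewrite cfM0 h0 mulr0. Qed.
Lemma ideal_ac : l + be - 1 = 0 -> is_ideal l be <<[:: a; c]>>%VS.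
Proof.
move=> hq x y /ac_cf [h0 h2]; apply: mem_ac.
- by rewrite cfM0 h0 mulr0.
- by rewrite cfM2 h0 h2 hq; ring.
Qed.
Lemma ideal_bc : l - be = 0 -> is_ideal l be <<[:: b; c]>>%VS.
Proof.
move=> hp x y /bc_cf [h0 h1]; apply: mem_bc.
- by rewrite cfM0 h0 mulr0.
- by rewrite cfM1 h0 h1 hp; ring.
Qed.

Lemma c_neq0 : c != 0.
Proof. apply/eqP => h; have := cf0 3; rewrite -h /vc cf_bvec //= => /eqP; rewrite oner_eq0 //. Qed.

Lemma nzp_of (X : {vspace 'rV[R]_4}) :
  is_ideal l be X -> c \in X -> (forall y, y \in X -> cf y 0 = 0) -> nonzero_proper_ideal l be X.
Proof.
move=> hX hc h0; split => //; apply/eqP => E.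
  by move: hc; rewrite E memv0 (negbTE c_neq0).
have := h0 o; rewrite E memvf => /(_ isT) /eqP; rewrite /vo cf_bvec //= oner_eq0 //.
Qed.

Lemma nzp_c : nonzero_proper_ideal l be <[c]>%VS.
Proof. apply: nzp_of; [exact: ideal_c | exact: memv_line | by move=> y /c_cf []]. Qed.
Lemma nzp_abc : nonzero_proper_ideal l be <<[:: a; b; c]>>%VS.
Proof. apply: nzp_of; [exact: ideal_abc | by rewrite inspan // !inE eqxx ?orbT | exact: abc_cf]. Qed.
Lemma nzp_ac : l + be - 1 = 0 -> nonzero_proper_ideal l be <<[:: a; c]>>%VS.
Proof. move=> h; apply: nzp_of; [exact: ideal_ac | by rewrite inspan // !inE eqxx ?orbT | by move=> y /ac_cf []]. Qed.
Lemma nzp_bc : l - be = 0 -> nonzero_proper_ideal l be <<[:: b; c]>>%VS.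
Proof. move=> h; apply: nzp_of; [exact: ideal_bc | by rewrite inspan // !inE eqxx ?orbT | by move=> y /bc_cf []]. Qed.

End S.

Theorem mainTheorem7 (R : realFieldType) (l be : R) :
  0 < l < 1 -> 0 < be < 1 ->
  [/\ (be = l -> l != 2^-1 ->
         forall I : {vspace 'rV[R]_4}, nonzero_proper_ideal l be I <->
           [\/ I = <[vc R]>%VS, I = <<[:: vb R; vc R]>>%VS
             | I = <<[:: va R; vb R; vc R]>>%VS]),
      (be = 1 - l -> l != 2^-1 ->
         forall I : {vspace 'rV[R]_4}, nonzero_proper_ideal l be I <->
           [\/ I = <[vc R]>%VS, I = <<[:: va R; vc R]>>%VS
             | I = <<[:: va R; vb R; vc R]>>%VS]),
      (be != l -> be != 1 - l ->
         forall I : {vspace 'rV[R]_4}, nonzero_proper_ideal l be I <->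
           (I = <[vc R]>%VS \/ I = <<[:: va R; vb R; vc R]>>%VS))
    & (l = 2^-1 -> be = 2^-1 ->
         forall I : {vspace 'rV[R]_4}, nonzero_proper_ideal l be I <->
           [\/ I = <[vc R]>%VS, I = <<[:: va R; vc R]>>%VS,
               I = <<[:: vb R; vc R]>>%VS
             | I = <<[:: va R; vb R; vc R]>>%VS])].
Proof.
move=> /andP [l0 l1] /andP [b0 b1].
have hl0 : l != 0 by rewrite lt0r_neq0.
have hl1 : l != 1 by rewrite lt_eqF.
split.
- move=> hb hh I; split.
    move=> [hI hnz hpr]; case: (classify hl0 hl1 hI hnz hpr) => [->|[_ hq]|[-> _]|->].
    + exact: Or31.
    + by case/eqP: hh; rewrite hb in hq; lra.
    + exact: Or32.
    + exact: Or33.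
  case=> ->; [exact: nzp_c | apply: nzp_bc; rewrite hb subrr // | exact: nzp_abc].
- move=> hb hh I; split.
    move=> [hI hnz hpr]; case: (classify hl0 hl1 hI hnz hpr) => [->|[-> _]|[_ hp]|->].
    + exact: Or31.
    + exact: Or32.
    + by case/eqP: hh; rewrite hb in hp; lra.
    + exact: Or33.
  case=> ->; [exact: nzp_c | apply: nzp_ac; rewrite hb; ring | exact: nzp_abc].
- move=> hp hq I; split.
    move=> [hI hnz hpr]; case: (classify hl0 hl1 hI hnz hpr) => [->|[_ h]|[_ h]|->].
    + by left.
    + by case/eqP: hq; lra.
    + by case/eqP: hp; lra.
    + by right.
  case=> ->; [exact: nzp_c | exact: nzp_abc].
- move=> hl hb I; split.
    move=> [hI hnz hpr]; case: (classify hl0 hl1 hI hnz hpr) => [->|[-> _]|[-> _]|->].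
    + exact: Or41.
    + exact: Or42.
    + exact: Or43.
    + exact: Or44.
  case=> ->; [exact: nzp_c | apply: nzp_ac | apply: nzp_bc | exact: nzp_abc];
    rewrite hl hb; lra.
Qed.
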